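(* Let $H$ and $J$ be complex Hilbert spaces with $H$ infinite dimensional, and let $T \in \mathcal{L}(H,J)$ be a compact operator. Then $T$ satisfies the property $\mathcal{N}^*$ if and only if $T$ is non-injective.
   Context: $\mathcal{L}(H,J)$ denotes the space of bounded linear operators from $H$ to $J$. For $T \in \mathcal{L}(H,J)$ put $[T] := \inf_{\|x\|_H = 1} \|Tx\|_J$. An operator $T \in \mathcal{L}(H,J)$ satisfies the property $\mathcal{N}^*$ if there exists $x_0 \in H$ with $\|x_0\|_H = 1$ such that $[T] = \|T x_0\|_J$. *)

(* Defs.v *)
From HB Require Import structures.
From mathcomp Require Import all_boot all_order all_algebra.
From mathcomp Require Import complex.
From mathcomp Require Import all_classical all_reals all_analysis.
Set Implicit Arguments. Unset Strict Implicit. Unset Printing Implicit Defensive.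
Import Order.TTheory GRing.Theory Num.Theory.
Import numFieldNormedType.Exports.
Local Open Scope classical_set_scope.
Local Open Scope ring_scope.

(* An inner product on a normed space V over R[i] inducing its norm:
   linear in the first argument, conjugate symmetric, <x,x> = |x|^2
   (positive definiteness follows from the norm axioms). *)
Definition is_inner_product (R : realType) (V : normedModType R[i])
    (ip : V -> V -> R[i]) : Prop :=
  [/\ forall (a : R[i]) (x y z : V), ip (a *: x + y) z = a * ip x z + ip y z,
      forall x y : V, ip y x = ((ip x y)^*)%C
    & forall x : V, ip x x = `|x| ^+ 2].

Definition is_hilbert (R : realType) (V : completeNormedModType R[i]) : Prop :=
  exists ip : V -> V -> R[i], is_inner_product ip.

Definition infinite_dimensional (R : realType) (V : normedModType R[i]) : Prop :=
  forall (n : nat) (e : 'I_n -> V), exists x : V,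
    forall c : 'I_n -> R[i], x <> \sum_(i < n) c i *: e i.

Definition bounded_linear (R : realType) (H J : normedModType R[i])
    (T : H -> J) : Prop :=
  linear T /\ continuous T.

Definition compact_operator (R : realType) (H J : normedModType R[i])
    (T : H -> J) : Prop :=
  compact (closure (T @` closed_ball (0 : H) 1)).

(* [T] := inf_{|x| = 1} |T x|  (norms are real elements of R[i]; we take Re). *)
Definition lower_bound (R : realType) (H J : normedModType R[i])
    (T : H -> J) : R :=
  inf [set complex.Re `|T x| | x in [set x : H | `|x| = 1]].

Definition property_Nstar (R : realType) (H J : normedModType R[i])
    (T : H -> J) : Prop :=
  exists x0 : H, `|x0| = 1 /\ lower_bound T = complex.Re `|T x0|.

(* Main.v *)
Require Import Defs.
From HB Require Import structures.
From mathcomp Require Import all_boot all_order all_algebra.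
From mathcomp Require Import complex.
From mathcomp Require Import all_classical all_reals all_analysis.
From mathcomp Require Import lra ring.
Set Implicit Arguments. Unset Strict Implicit. Unset Printing Implicit Defensive.
Import Order.TTheory GRing.Theory Num.Theory.
Import numFieldNormedType.Exports.
Local Open Scope classical_set_scope.
Local Open Scope ring_scope.
Local Open Scope complex_scope.

Section Aux.
Variable R : realType.

Lemma normC_re (V : normedModType R[i]) (v : V) : (complex.Re `|v|)%:C = `|v|.
Proof. exact/RRe_real/ger0_real/normr_ge0. Qed.

Lemma re_norm_ge0 (V : normedModType R[i]) (v : V) : 0 <= complex.Re `|v|.
Proof. by rewrite -ler0c normC_re. Qed.

Variables (H J : normedModType R[i]) (T : H -> J).
Hypothesis lT : linear T.

Lemma T0 : T 0 = 0.
Proof.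
have := lT 1 0 0; rewrite !scale1r addr0.
by move/(congr1 (fun v => v - T 0)); rewrite addrK subrr.
Qed.

Lemma TZ a x : T (a *: x) = a *: T x.
Proof. by have := lT a x 0; rewrite !addr0 T0 addr0. Qed.

Lemma TB x y : T (x - y) = T x - T y.
Proof. by have := lT (-1) y x; rewrite !scaleN1r (addrC x) (addrC (T x)). Qed.

Lemma lbT_set_lb : lbound [set complex.Re `|T x| | x in [set x : H | `|x| = 1]] 0.
Proof. by move=> _ [x _ <-]; apply: re_norm_ge0. Qed.

Lemma lower_bound_le x : `|x| = 1 -> lower_bound T <= complex.Re `|T x|.
Proof.
move=> hx; apply: (ge_inf (ex_intro _ 0 lbT_set_lb)); by exists x.
Qed.

End Aux.
Section IP.
Variables (R : realType) (V : normedModType R[i]) (ip : V -> V -> R[i]).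
Hypothesis hip : is_inner_product ip.

Let lin a x y z : ip (a *: x + y) z = a * ip x z + ip y z.
Proof. by case: hip. Qed.
Let csym x y : ip y x = conjc (ip x y).
Proof. by case: hip. Qed.
Let nrm x : ip x x = `|x| ^+ 2.
Proof. by case: hip. Qed.

Lemma ip0l z : ip 0 z = 0.
Proof.
have := lin 1 0 0 z; rewrite scale1r addr0 mul1r.
by move/(congr1 (fun v => v - ip 0 z)); rewrite addrK subrr.
Qed.

Lemma ipZl a x z : ip (a *: x) z = a * ip x z.
Proof. by have := lin a x 0 z; rewrite addr0 ip0l addr0. Qed.

Lemma ipDl x y z : ip (x + y) z = ip x z + ip y z.
Proof. by have := lin 1 x y z; rewrite scale1r mul1r. Qed.

Lemma ipBl x y z : ip (x - y) z = ip x z - ip y z.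
Proof. by rewrite ipDl -scaleN1r ipZl mulN1r. Qed.

Lemma ip_suml (l : seq V) (F : V -> V) z :
  ip (\sum_(v <- l) F v) z = \sum_(v <- l) ip (F v) z.
Proof.
elim: l => [|a l IH]; first by rewrite !big_nil ip0l.
by rewrite !big_cons ipDl IH.
Qed.

Lemma ip_sym0 x y : ip x y = 0 -> ip y x = 0.
Proof. by move=> h; rewrite csym h conjc0. Qed.

Definition ON (l : seq V) :=
  [/\ uniq l, forall v, v \in l -> ip v v = 1
    & forall v w, v \in l -> w \in l -> v != w -> ip v w = 0].

Lemma exists_orth (l : seq V) : infinite_dimensional V -> ON l ->
  exists x, ip x x = 1 /\ forall w, w \in l -> ip x w = 0.
Proof.
move=> hinf [ul l1 l0].
have [x hx] := hinf (size l) (fun i => nth 0 l i).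
pose y := x - \sum_(v <- l) ip x v *: v.
have y0 : y != 0.
  apply/eqP => /eqP; rewrite subr_eq0 => /eqP hxe.
  apply: (hx (fun i => ip x (nth 0 l i))).
  by rewrite {1}hxe (big_nth 0) big_mkord.
have yw w : w \in l -> ip y w = 0.
  move=> wl; rewrite ipBl ip_suml (bigD1_seq w) //= ipZl l1 // mulr1.
  rewrite big_seq_cond big1 ?addr0 ?subrr // => v /andP[vl vw].
  by rewrite ipZl (l0 v w vl wl vw) mulr0.
exists (`|y|^-1 *: y); split.
  rewrite nrm normrZ ger0_norm ?invr_ge0 // mulVf ?expr1n //.
  by rewrite normr_eq0.
by move=> w wl; rewrite ipZl yw ?mulr0.
Qed.


Lemma orth_seq : infinite_dimensional V -> exists e : nat -> V,
  (forall n, ip (e n) (e n) = 1) /\ (forall n m, n <> m -> ip (e n) (e m) = 0).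
Proof.
move=> hinf.
have [g hg] : exists g : seq V -> V, forall l, ON l ->
    ip (g l) (g l) = 1 /\ forall w, w \in l -> ip (g l) w = 0.
  suff H : forall l, exists x, ON l ->
      ip x x = 1 /\ forall w, w \in l -> ip x w = 0.
    by have [g hg] := boolp.choice H; exists g.
  move=> l; have [h|h] := pselect (ON l).
    by have [x hx] := exists_orth hinf h; exists x.
  by exists 0.
pose s n := iter n (fun l => g l :: l) [::].
have sS n : s n.+1 = g (s n) :: s n by [].
have sON n : ON (s n).
  elim: n => [|n [u1 u2 u3]]; first by split.
  have [g1 g0] := hg _ (And3 u1 u2 u3).
  have gnotin : g (s n) \notin s n.
    apply/negP => hin; have := g0 _ hin; rewrite g1 => /eqP.
    by rewrite oner_eq0.
  split.
  - by rewrite sS /= gnotin u1.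
  - by move=> v; rewrite sS inE => /orP[/eqP->|]; [exact: g1 | exact: u2].
  - move=> v w; rewrite sS !inE => /orP[/eqP->|vl] /orP[/eqP->|wl] vw.
    + by rewrite eqxx in vw.
    + exact: g0.
    + exact/ip_sym0/g0.
    + exact: u3.
have mem n m : (n < m)%N -> g (s n) \in s m.
  elim: m => [//|m IH]; rewrite ltnS leq_eqVlt sS inE => /orP[/eqP->|/IH ->].
    by rewrite eqxx.
  by rewrite orbT.
exists (fun n => g (s n)); split.
  by move=> n; have [] := hg _ (sON n).
move=> n m nm; case: (ltngtP n m) => [lt|gt|eq]; last by [].
  by apply/ip_sym0; have [_ ->] := hg _ (sON m); [|exact: mem].
by have [_ ->] := hg _ (sON n); [|exact: mem].
Qed.

Lemma orth_dist (e : nat -> V) : (forall n, ip (e n) (e n) = 1) ->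
  (forall n m, n <> m -> ip (e n) (e m) = 0) ->
  forall n m, n <> m -> 1 <= `|e n - e m|.
Proof.
move=> e1 e0 n m nm.
have h2 : `|e n - e m| ^+ 2 = 2.
  have mn : m <> n by move=> h; apply: nm.
  rewrite -nrm ipBl (csym (e n - e m) (e n)) (csym (e n - e m) (e m)) !ipBl.
  rewrite !e1 (e0 _ _ nm) (e0 _ _ mn) subr0 conjc1 sub0r.
  have cN1 : conjc (-1 : R[i]) = -1 by apply/eqP; rewrite eq_complex /= ?oppr0 ?opprK !eqxx.
  by rewrite cN1 opprK.
have nre : (complex.Re `|e n - e m|)%:C%C = `|e n - e m|.
  exact/RRe_real/ger0_real/normr_ge0.
rewrite -nre in h2.
have r0 : 0 <= complex.Re `|e n - e m| by rewrite -ler0c nre.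
move: r0 h2; set r := complex.Re _ => r0 h2.
have := congr1 (@complex.Re R) h2; rewrite expr2 /= mulr0 subr0 => hr.
rewrite -nre (_ : (1 : R[i]) = (1:R)%:C%C) // lecR.
nra.
Qed.

End IP.

Lemma norm_unit (R : realType) (V : normedModType R[i]) (z : V) :
  z != 0 -> `| `|z|^-1 *: z | = 1.
Proof.
move=> z0; rewrite normrZ ger0_norm ?invr_ge0 // mulVf //.
by rewrite normr_eq0.
Qed.

Theorem proposition1p2 (R : realType) (H J : completeNormedModType R[i])
    (hH : is_hilbert H) (hJ : is_hilbert J) (hinf : infinite_dimensional H)
    (T : H -> J) (hT : bounded_linear T) (hK : compact_operator T) :
  property_Nstar T <-> ~ injective T.
Proof.
have [lT cT] := hT.
split.
- move=> [x0 [nx0 hlb]] inj.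
  have [ip hip] := hH.
  have [e [e1 e0]] := orth_seq hip hinf.
  have enorm n : `|e n| = 1.
    apply/eqP; rewrite -sqrp_eq1 //.
    by case: hip => _ _ <-; rewrite e1.
  set c := `|T x0|.
  have c0 : 0 < c.
    rewrite normr_gt0; apply/negP => /eqP h.
    have : x0 = 0 by apply: inj; rewrite h T0.
    by move=> x00; move: nx0; rewrite x00 normr0 => /eqP; rewrite eq_sym oner_eq0.
  have lbz z : c * `|z| <= `|T z|.
    have [->|z0] := eqVneq z 0; first by rewrite normr0 mulr0 normr_ge0.
    set u := `|z|^-1 *: z.
    have hu := norm_unit z0.
    have cu : c <= `|T u|.
      have := lower_bound_le T hu; rewrite hlb.
      by rewrite -lecR !normC_re.
    have zE : z = `|z| *: u.
      by rewrite /u scalerA mulfV ?scale1r // normr_eq0.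
    rewrite [in X in _ <= X]zE TZ // normrZ normr_id mulrC.
    by apply: ler_wpM2l.
  set w := fun n => (2^-1 : R[i]) *: e n.
  set f := fun n => T (w n).
  have h2 : (0 : R[i]) < 2^-1 by rewrite invr_gt0 ltr0n.
  have dist n m : n <> m -> c / 2 <= `|f n - f m|.
    move=> nm; rewrite /f -TB //.
    apply: le_trans (lbz _).
    rewrite /w -scalerBr normrZ ger0_norm ?(ltW h2) //.
    rewrite mulrA.
    apply: ler_peMr; first by rewrite ltW // divr_gt0 ?ltr0n.
    exact (orth_dist hip e1 e0 nm).
  have FA : (f @ \oo) (closure (T @` closed_ball (0 : H) 1)).
    exists 0%N => // n _; apply: subset_closure; exists (w n) => //.
    apply: subset_closure.
    rewrite -ball_normE /ball_ /= sub0r normrN /w normrZ enorm mulr1 ger0_norm ?(ltW h2) //.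
    by rewrite invf_lt1 ?ltr0n // ltr1n.
  have [p [_ clp]] := hK (f @ \oo) (fmap_proper_filter _ _) FA.
  have c20 : 0 < c / 2 / 2 by rewrite !divr_gt0.
  have nb := nbhsx_ballx p _ c20.
  have Fr : (f @ \oo) (range f) by exists 0%N => // n _; exists n.
  have [_ [[n1 _ <-] b1]] := clp _ _ Fr nb.
  have Fr2 : (f @ \oo) (f @` [set m | (n1 < m)%N]).
    by exists n1.+1 => // m hm; exists m.
  have [_ [[m hm <-] b2]] := clp _ _ Fr2 nb.
  have nm : n1 <> m by move=> h; move: hm; rewrite h /= ltnn.
  have := dist _ _ nm.
  rewrite -ball_normE /ball_ in b1 b2.
  have : `|f n1 - f m| < c / 2.
    have -> : f n1 - f m = (p - f m) - (p - f n1).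
      by rewrite opprB [RHS]addrC addrA subrK.
    apply: le_lt_trans (ler_normB _ _) _.
    by rewrite [X in _ < X]splitr addrC; apply: ltrD.
  move=> lt le; have := le_lt_trans le lt.
  by rewrite ltxx.
- move=> ninj.
  have [a [b [hab ab]]] : exists a b, T a = T b /\ a <> b.
    apply: boolp.contrapT => H0; apply: ninj => a b hab.
    apply: boolp.contrapT => ab; apply: H0; by exists a, b.
  set z := a - b.
  have z0 : z != 0 by rewrite subr_eq0; apply/eqP.
  have Tz : T z = 0 by rewrite TB // hab subrr.
  exists (`|z|^-1 *: z); split; first exact: norm_unit.
  rewrite TZ // Tz scaler0 normr0.
  apply/eqP; rewrite eq_le; apply/andP; split.
    have := lower_bound_le T (norm_unit z0).
    by rewrite TZ // Tz scaler0 normr0.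
  apply: lb_le_inf; last exact: lbT_set_lb.
  exists (complex.Re `|T (`|z|^-1 *: z)|), (`|z|^-1 *: z) => //.
  exact: norm_unit.
Qed.
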